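(* Let $G$ be a finitely generated discrete group and $q:\mathcal O_{\exp}(G)\to\mathbb R_+$ a continuous submultiplicative seminorm ($q(uv)\le q(u)q(v)$ for pointwise multiplication). Then (a) the support $\operatorname{supp}(q)=\{x\in G: q(1_x)\ne0\}$ is finite, and (b) $q(1_x)\ge1$ for every $x\in\operatorname{supp}(q)$.
   Context: A semicharacter is a function $f:G\to[1,\infty)$ with $f(xy)\le f(x)f(y)$. $\mathcal O_{\exp}(G)$ is the set of functions $u:G\to\mathbb C$ with $|u|\le f$ for some semicharacter $f$, with the locally convex inductive limit topology of the spaces $\mathbb Cf^{\blacksquare}=\bigcup_\lambda\lambda f^{\blacksquare}$, $f^{\blacksquare}=\{u:|u|\le f\}$, each with the topology in which a set is closed iff it meets every $\lambda f^{\blacksquare}$ in a set closed for pointwise convergence. $1_x$ is the characteristic function of $\{x\}$. *)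

(* Defs.v *)
From HB Require Import structures.
From mathcomp Require Import all_boot all_order all_algebra.
From mathcomp Require Import complex.
From mathcomp Require Import all_classical all_reals topology normedtype.
Import numFieldTopology.Exports.

Set Implicit Arguments.
Unset Strict Implicit.
Unset Printing Implicit Defensive.

Import Order.TTheory GRing.Theory Num.Theory.
Local Open Scope ring_scope.
Local Open Scope classical_set_scope.
Local Open Scope complex_scope.

(* A (discrete) group G is a MathComp [groupType] (boot/monoid.v), possibly infinite.
   The complex numbers are [R[i]] for a real field [R : realType]. *)

Definition finitely_generated (G : groupType) : Prop :=
  exists S : seq G, forall x : G, exists w : seq G,
    all (fun y => (y \in S) || ((y^-1)%g \in S)) w /\ x = (\prod_(y <- w) y)%g.

Definition semicharacter (G : groupType) (R : realType) (f : G -> R) : Prop :=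
  (forall x, 1 <= f x) /\ (forall x y, f (x * y)%g <= f x * f y).

Definition fball (G : groupType) (R : realType) (f : G -> R) (l : R) : set (G -> R[i]) :=
  [set u | forall x, `|u x| <= (l * f x)%:C].

Definition Cfball (G : groupType) (R : realType) (f : G -> R) : set (G -> R[i]) :=
  [set u | exists l : R, 0 < l /\ fball f l u].

Definition Oexp (G : groupType) (R : realType) : set (G -> R[i]) :=
  [set u | exists f : G -> R, semicharacter f /\ fball f 1 u].

Definition ptws_closed (G : groupType) (R : realType) (A : set (G -> R[i])) : Prop :=
  closed (A : set {ptws G -> (R[i])^o}).

Definition step_closed (G : groupType) (R : realType) (f : G -> R) (A : set (G -> R[i])) : Prop :=
  A `<=` Cfball f /\ forall l : R, 0 < l -> ptws_closed (A `&` fball f l).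

Definition step_open (G : groupType) (R : realType) (f : G -> R) (U : set (G -> R[i])) : Prop :=
  U `<=` Cfball f /\ step_closed f (Cfball f `\` U).

Definition fadd (G : groupType) (R : realType) (u v : G -> R[i]) : G -> R[i] :=
  fun x => u x + v x.
Definition fscale (G : groupType) (R : realType) (a : R[i]) (u : G -> R[i]) : G -> R[i] :=
  fun x => a * u x.
Definition fmul (G : groupType) (R : realType) (u v : G -> R[i]) : G -> R[i] :=
  fun x => u x * v x.

Definition topology_on (T : Type) (X : set T) (Tau : set (set T)) : Prop :=
  [/\ (forall U, Tau U -> U `<=` X), Tau X,
      (forall F : set (set T), F `<=` Tau -> Tau (\bigcup_(U in F) U)) &
      (forall U V, Tau U -> Tau V -> Tau (U `&` V))].

Definition lc_topology_on (G : groupType) (R : realType)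
    (X : set (G -> R[i])) (Tau : set (set (G -> R[i]))) : Prop :=
  [/\ topology_on X Tau,
      (forall u v, X u -> X v -> forall W, Tau W -> W (fadd u v) ->
         exists U V, [/\ Tau U, Tau V, U u, V v &
           forall u' v', U u' -> V v' -> W (fadd u' v')]),
      (forall (a : R[i]) u, X u -> forall W, Tau W -> W (fscale a u) ->
         exists (e : R) U, [/\ 0 < e, Tau U, U u &
           forall (b : R[i]) u', `|b - a| < e%:C -> U u' -> W (fscale b u')]) &
      (forall W, Tau W -> W (fun _ => 0) ->
         exists V, [/\ Tau V, V (fun _ => 0), V `<=` W &
           forall u v (t : R), V u -> V v -> 0 <= t <= 1 ->
             V (fadd (fscale t%:C u) (fscale (1 - t)%:C v))])].

(** admissible topologies on O_exp(G): locally convex topologies for which every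
    inclusion C f^[] -> O_exp(G) (f a semicharacter) is continuous *)
Definition Oexp_admissible (G : groupType) (R : realType) (Tau : set (set (G -> R[i]))) : Prop :=
  lc_topology_on (@Oexp G R) Tau /\
  forall f : G -> R, semicharacter f -> forall U, Tau U -> step_open f (U `&` Cfball f).

(** open sets of the locally convex inductive limit topology on O_exp(G):
    the topology generated by all admissible topologies (i.e. their supremum,
    the finest locally convex topology making all inclusions continuous). *)
Definition Oexp_open (G : groupType) (R : realType) (U : set (G -> R[i])) : Prop :=
  U `<=` @Oexp G R /\
  forall u, U u -> exists (n : nat) (T : 'I_n -> set (set (G -> R[i])))
                        (W : 'I_n -> set (G -> R[i])),
    (forall k, [/\ Oexp_admissible (T k), T k (W k) & W k u]) /\
    (forall v, @Oexp G R v -> (forall k, W k v) -> U v).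

Definition Oexp_continuous (G : groupType) (R : realType) (q : (G -> R[i]) -> R) : Prop :=
  forall O : set R, open O -> Oexp_open (@Oexp G R `&` (q @^-1` O)).

Definition submult_seminorm (G : groupType) (R : realType) (q : (G -> R[i]) -> R) : Prop :=
  [/\ (forall u, @Oexp G R u -> 0 <= q u),
      (forall u v, @Oexp G R u -> @Oexp G R v -> q (fadd u v) <= q u + q v),
      (forall (a : R[i]) u, @Oexp G R u -> (q (fscale a u))%:C = `|a| * (q u)%:C) &
      (forall u v, @Oexp G R u -> @Oexp G R v -> q (fmul u v) <= q u * q v)].

Definition indic (G : groupType) (R : realType) (x : G) : G -> R[i] :=
  fun y => if y == x then 1 else 0.

Definition qsupp (G : groupType) (R : realType) (q : (G -> R[i]) -> R) : set G :=
  [set x | q (@indic G R x) != 0].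

(* Main.v *)
Require Import Defs.
From HB Require Import structures.
From mathcomp Require Import all_boot all_order all_algebra.
From mathcomp Require Import complex.
From mathcomp Require Import all_classical all_reals topology normedtype.
Import numFieldTopology.Exports.
Import Order.TTheory GRing.Theory Num.Theory.
Local Open Scope ring_scope.
Local Open Scope classical_set_scope.

Section S.
Variables (G : groupType) (R : realType).
Local Open Scope complex_scope.

Lemma semichar1 : semicharacter (fun _ : G => (1 : R)).
Proof. by split => // x y; rewrite mulr1. Qed.

Lemma indic_fball (x : G) : fball (fun _ : G => (1 : R)) 1 (indic R x).
Proof.
move=> y; rewrite /indic mulr1; case: ifP => _; by rewrite ?normr1 ?normr0.
Qed.

Lemma indic_Oexp (x : G) : Oexp (indic R x).
Proof. exists (fun _ => 1); split; [exact: semichar1 | exact: indic_fball]. Qed.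

Lemma zero_Oexp : Oexp (fun _ : G => (0 : R[i])).
Proof.
exists (fun _ => 1); split; first exact: semichar1.
by move=> y; rewrite normr0 mulr1.
Qed.

Lemma indic_mul (x : G) : fmul (indic R x) (indic R x) = indic R x.
Proof. by apply: funext => y; rewrite /fmul /indic; case: ifP; rewrite ?mulr1 ?mulr0. Qed.

Lemma q0 (q : (G -> R[i]) -> R) : submult_seminorm q -> q (fun _ => 0) = 0.
Proof.
case=> _ _ hs _.
have := hs 0 _ zero_Oexp; rewrite normr0 mul0r.
have -> : fscale 0 (fun _ : G => (0 : R[i])) = (fun _ => 0).
  by apply: funext => y; rewrite /fscale mul0r.
by case.
Qed.

Lemma partb (q : (G -> R[i]) -> R) : submult_seminorm q ->
  forall x, qsupp q x -> 1 <= q (indic R x).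
Proof.
move=> hq x hx; have [h0 _ _ hm] := hq.
have := hm _ _ (indic_Oexp x) (indic_Oexp x); rewrite indic_mul => h.
have hp : 0 < q (indic R x) by rewrite lt_def hx h0 //; exact: indic_Oexp.
by rewrite -(ler_pM2l hp) mulr1.
Qed.

Lemma parta (q : (G -> R[i]) -> R) : submult_seminorm q -> Oexp_continuous q ->
  finite_set (qsupp q).
Proof.
move=> hq hc.
have [Gfin|Ginf] := pselect (finite_set [set: G]).
  by apply: sub_finite_set Gfin.
have FF := frechet_properfilter Ginf.
have oO : open ([set r | r < 1] : set R) by exact: open_lt.
have [_ hU] := hc _ oO.
have U0 : (@Oexp G R `&` q @^-1` [set r : R | r < 1]) (fun _ : G => (0 : R[i])).
  by split; [exact: zero_Oexp | rewrite /= q0 // ltr01].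
have [n [T [W [hk hv]]]] := hU _ U0.
pose z : {ptws G -> (R[i])^o} := fun _ => 0.
pose f : G -> {ptws G -> (R[i])^o} := @indic G R.
have cv : f @ ((@frechet_filter G) : set_system G) --> z.
  apply: (proj2 (@pointwise_cvgP (discrete_topology G) (R[i])^o _ z _)) => t.
  apply: cvg_near_cst.
  apply: (sub_finite_set _ (finite_set1 (t : G))) => x /= hx.
  apply/eqP; apply: contra_notT hx => hxt.
  by rewrite /f /indic /= eq_sym (negbTE hxt).
have ev : forall k, (@frechet_filter G) [set x | W k (indic R x)].
  move=> k; have [adm TW W0] := hk k.
  have := (adm.2 _ (@semichar1) _ TW).2.2 1 ltr01.
  set B := (X in ptws_closed X) => cB.
  have nB : nbhs z (~` B).
    apply: open_nbhs_nbhs; split; first by rewrite openC.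
    by rewrite /B => -[[hC hn] _]; apply: hn.
  have h1 : (@frechet_filter G) (f @^-1` (~` B)) := cv _ nB.
  apply: filterS h1 => x /= nBx.
  apply: contra_notP nBx => nW; rewrite /B /f; split; last exact: indic_fball.
  split; first by exists 1; split; [exact: ltr01 | exact: indic_fball].
  by move=> [].
have := filter_forall FF ev.
rewrite /frechet_filter /= => Fin; apply: (sub_finite_set _ Fin) => x hx /= hall.
have := hv _ (indic_Oexp x) hall => -[_ /= hlt].
have := @partb q hq x hx.
by rewrite leNgt hlt.
Qed.
End S.

Theorem mainTheorem13 (G : groupType) (R : realType) (q : (G -> R[i]) -> R) :
  finitely_generated G ->
  submult_seminorm q ->
  Oexp_continuous q ->
  finite_set (qsupp q) /\ (forall x, qsupp q x -> 1 <= q (indic R x)).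
Proof.
move=> _ hq hc; split; [exact: parta | exact: partb].
Qed.
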